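(* Let $G\in\mathbb{R}^{m\times n}$ with rows $G_1^T,\dots,G_m^T$, let $b\in\mathbb{R}^m$, and let $\mathcal{P}=\{x\in\mathbb{R}^n : Gx\le b\}$ be a polyhedron that has an interior point. Let $f_d:\mathbb{R}^n\to\mathbb{R}^n$ be continuously differentiable and consider the discrete system $x_{k+1}=f_d(x_k)$. Assume that for every $i\in\{1,\dots,m\}$ the function $x\mapsto b_i-G_i^Tf_d(x)$ is convex. Then $\mathcal{P}$ is an invariant set for this discrete system if and only if there exists a matrix $H\in\mathbb{R}^{m\times m}$ with all entries nonnegative such that $$HGx-Gf_d(x)\ge Hb-b\quad\text{for all } x\in\mathbb{R}^n,$$ where the inequality between vectors is componentwise.
   Context: A set $\mathcal{S}\subseteq\mathbb{R}^n$ is an invariant set for the discrete system $x_{k+1}=f_d(x_k)$ if $x_k\in\mathcal{S}$ implies $x_{k+1}\in\mathcal{S}$ for all $k\in\mathbb{N}$. *)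

(* Defs.v *)
From HB Require Import structures.
From mathcomp Require Import all_boot all_order all_algebra.
From mathcomp Require Import all_classical all_reals all_analysis.
Set Implicit Arguments. Unset Strict Implicit. Unset Printing Implicit Defensive.
Import Order.TTheory GRing.Theory Num.Theory.
Import numFieldNormedType.Exports.
Local Open Scope classical_set_scope.
Local Open Scope ring_scope.

Definition mxle (R : realType) (p q : nat) (A B : 'M[R]_(p, q)) : Prop :=
  forall i j, A i j <= B i j.

Definition mxnonneg (R : realType) (p q : nat) (A : 'M[R]_(p, q)) : Prop :=
  forall i j, 0 <= A i j.

Definition polyhedron (R : realType) (m n : nat) (G : 'M[R]_(m, n)) (b : 'cV[R]_m)
  : set 'cV[R]_n := [set x | mxle (G *m x) b].

Definition invariant_set (R : realType) (n : nat) (f : 'cV[R]_n -> 'cV[R]_n)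
  (S : set 'cV[R]_n) : Prop :=
  forall x : nat -> 'cV[R]_n, (forall k, x k.+1 = f (x k)) ->
    forall k, S (x k) -> S (x k.+1).

(* continuously differentiable: differentiable everywhere, and the derivative
   x |-> 'd f x is continuous (tested on every direction v; equivalent to
   continuity in operator norm in finite dimension) *)
Definition C1 (R : realType) (n : nat) (f : 'cV[R]_n -> 'cV[R]_n) : Prop :=
  (forall x, differentiable f x) /\ (forall v, continuous (fun x => 'd f x v)).

Definition convex_fun (R : realType) (n : nat) (g : 'cV[R]_n -> R) : Prop :=
  forall (x y : 'cV[R]_n) (t : R), 0 <= t <= 1 ->
    g (t *: x + (1 - t) *: y) <= t * g x + (1 - t) * g y.

(* Main.v *)
Require Import Defs.
From HB Require Import structures.
From mathcomp Require Import all_boot all_order all_algebra.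
From mathcomp Require Import all_classical all_reals all_analysis.
From mathcomp Require Import ring lra.
Import Order.TTheory GRing.Theory Num.Theory.
Import numFieldNormedType.Exports.
Local Open Scope classical_set_scope.
Local Open Scope ring_scope.

Section Dual.
Variables (R : realType) (V : lmodType R).

Definition cvxset (D : set V) := forall x y (t : R), D x -> D y -> 0 <= t <= 1 ->
  D (t *: x + (1 - t) *: y).
Definition cvxon (D : set V) (g : V -> R) := forall x y (t : R), D x -> D y -> 0 <= t <= 1 ->
  g (t *: x + (1 - t) *: y) <= t * g x + (1 - t) * g y.
Definition affn (a : V -> R) := forall x y (t : R),
  a (t *: x + (1 - t) *: y) = t * a x + (1 - t) * a y.

Lemma key (D : set V) (g a : V -> R) x y : cvxset D -> cvxon D g -> affn a ->
  (forall z, D z -> 0 <= a z -> 0 <= g z) -> D x -> D y -> a y < 0 -> 0 < a x ->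
  g y / a y <= g x / a x.
Proof.
move=> cD cg aa hP Dx Dy ay ax.
have hd : 0 < a x - a y by lra.
pose t := a x / (a x - a y).
have t01 : 0 <= t <= 1.
  apply/andP; split; rewrite /t; first by apply: divr_ge0; lra.
  by rewrite ler_pdivrMr // mul1r; lra.
have h1t : 1 - t = - a y / (a x - a y) by rewrite /t; field; lra.
have az : a (t *: y + (1 - t) *: x) = 0.
  by rewrite aa h1t /t; field; lra.
have gz := hP _ (cD _ _ _ Dy Dx t01) (ltac:(by rewrite az)).
have h := cg _ _ _ Dy Dx t01.
have h2 : 0 <= a x * g y - a y * g x.
  have e : t * g y + (1 - t) * g x = (a x * g y - a y * g x) / (a x - a y).
    by rewrite h1t /t; field; lra.
  have := le_trans gz h; rewrite e => h3.
  have hi : 0 < (a x - a y)^-1 by rewrite invr_gt0.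
  by rewrite -(pmulr_rge0 _ hi) mulrC.
have ey : g y = (g y / a y) * a y by field; lra.
have ex : g x = (g x / a x) * a x by field; lra.
move: h2; rewrite {1}ey {1}ex.
set u := g y / a y; set v := g x / a x => h2.
have hn : a x * a y < 0 by rewrite pmulr_rlt0.
have h4 : 0 <= (a x * a y) * (u - v).
  by have -> : (a x * a y) * (u - v) = a x * (u * a y) - a y * (v * a x) by ring.
rewrite nmulr_rge0 // in h4; lra.
Qed.

Arguments key {D g a x y}.

Lemma one (D : set V) (g a : V -> R) : cvxset D -> cvxon D g -> affn a ->
  (forall z, D z -> 0 <= a z -> 0 <= g z) ->
  ((exists2 x0, D x0 & 0 < a x0) \/ (forall z, D z -> 0 <= a z)) ->
  exists2 l : R, 0 <= l & forall z, D z -> l * a z <= g z.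
Proof.
move=> cD cg aa hP [[x0 Dx0 ax0]|hall]; last first.
  by exists 0 => // z Dz; rewrite mul0r; apply: hP => //; apply: hall.
pose S := [set g y / a y | y in [set y | D y /\ a y < 0]].
have ub : ubound S (g x0 / a x0).
  by move=> _ [y [Dy ay] <-]; exact: (key cD cg aa hP Dx0 Dy ay ax0).
have [[s Ss]|S0] := pselect (S !=set0); last first.
  exists 0 => // z Dz; rewrite mul0r.
  have [az|az] := leP 0 (a z); first by apply: hP.
  by exfalso; apply: S0; exists (g z / a z); exists z.
have hs : has_ubound S by exists (g x0 / a x0).
exists (Num.max 0 (sup S)); first by rewrite le_max lexx.
move=> z Dz.
have [az|az] := ltP (a z) 0.
  have h1 : g z / a z <= sup S by apply: ub_le_sup => //; exists z.
  have h2 : sup S <= Num.max 0 (sup S) by rewrite le_max lexx orbT.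
  have ez : g z = (g z / a z) * a z by field; lra.
  rewrite [X in _ <= X]ez.
  by apply: ler_wnM2r; [exact: ltW | exact: le_trans h2].
have [az0|az0] := eqVneq (a z) 0.
  by rewrite az0 mulr0; apply: hP; rewrite ?az0.
have azp : 0 < a z by rewrite lt_neqAle eq_sym az0 az.
have h1 : sup S <= g z / a z.
  apply: ge_sup; first by exists s.
  by move=> _ [y [Dy ay] <-]; exact: (key cD cg aa hP Dz Dy ay azp).
have h0 : 0 <= g z / a z by apply: divr_ge0 => //; apply: hP.
have h2 : Num.max 0 (sup S) <= g z / a z by rewrite ge_max h0 h1.
have ez : g z = (g z / a z) * a z by field; lra.
rewrite [X in _ <= X]ez.
by apply: ler_wpM2r; [exact: ltW | exact: h2].
Qed.

Lemma multi (m : nat) : forall (a : nat -> V -> R) (D : set V) (g : V -> R),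
  cvxset D -> cvxon D g -> (forall j, affn (a j)) ->
  (forall z, D z -> (forall j, (j < m)%N -> 0 <= a j z) -> 0 <= g z) ->
  (exists2 x0, D x0 & forall j, (j < m)%N -> 0 < a j x0 \/ forall z, 0 <= a j z) ->
  exists l : nat -> R, (forall j, 0 <= l j) /\
    forall z, D z -> \sum_(j < m) l j * a j z <= g z.
Proof.
elim: m => [|m IH] a D g cD cg aa hP [x0 Dx0 hx0].
  exists (fun _ => 0); split => // z Dz; rewrite big_ord0; exact: hP.
pose D' := [set z | D z /\ forall j, (j < m)%N -> 0 <= a j z].
have cD' : cvxset D'.
  move=> x y t [Dx hx] [Dy hy] t01; split; first exact: cD.
  move=> j jm; rewrite aa; have := hx _ jm; have := hy _ jm; move: t01 => /andP[t0 t1].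
  move=> h1 h2; apply: addr_ge0; apply: mulr_ge0 => //; lra.
have cg' : cvxon D' g by move=> x y t [Dx _] [Dy _]; exact: cg.
have hP' : forall z, D' z -> 0 <= a m z -> 0 <= g z.
  move=> z [Dz hz] hm; apply: hP => // j; rewrite ltnS leq_eqVlt => /orP[/eqP->//|]; exact: hz.
have Dx0' : D' x0.
  split => // j jm; have [h|h] := hx0 j (ltnW jm); [exact: ltW| exact: h].
have sl : (exists2 x0, D' x0 & 0 < a m x0) \/ (forall z, D' z -> 0 <= a m z).
  have [h|h] := hx0 m (ltnSn m); [left; exists x0 => // | right => z _; exact: h].
have [mu mu0 hmu] := @one D' g (a m) cD' cg' (aa m) hP' sl.
pose g' := fun z => g z - mu * a m z.
have cg2 : cvxon D g'.
  move=> x y t Dx Dy t01; rewrite /g' aa; have := cg x y t Dx Dy t01; lra.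
have hP2 : forall z, D z -> (forall j, (j < m)%N -> 0 <= a j z) -> 0 <= g' z.
  move=> z Dz hz; rewrite /g' subr_ge0; exact: hmu.
have [l [l0 hl]] := IH a D g' cD cg2 aa hP2 (ex_intro2 _ _ x0 Dx0 (fun j jm => hx0 j (ltnW jm))).
exists (fun j => if j == m then mu else l j); split.
  by move=> j; case: ifP.
move=> z Dz; rewrite big_ord_recr /= eqxx.
rewrite (eq_bigr (fun j : 'I_m => l j * a j z)); last first.
  by move=> i _; rewrite ltn_eqF.
have := hl z Dz; rewrite /g'; lra.
Qed.
End Dual.
Arguments affn {R V}.
Arguments cvxset {R V}.
Arguments cvxon {R V}.

Lemma near_dir (R : realType) n (x0 v : 'cV[R]_n) (P : set 'cV[R]_n) :
  nbhs x0 P -> exists2 e : R, 0 < e & P (x0 + e *: v).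
Proof.
move=> hP.
have hc : (fun e : R => x0 + e *: v) @ (nbhs (0:R)) --> x0.
  rewrite -[X in _ --> X]addr0 -[X in _ --> x0 + X](scale0r v).
  apply: cvgD; first exact: cvg_cst.
  by apply: cvgZr_tmp; exact: cvg_id.
have := hc _ hP; move/nbhs_ballP => [r /= r0 hr].
exists (r / 2); first by apply: divr_gt0.
apply: hr; rewrite /ball /= sub0r normrN ger0_norm; last by apply: ltW; apply: divr_gt0.
by rewrite ltr_pdivrMr // ltr_pMr // ltr1n.
Qed.

Theorem theorem4 (R : realType) (m n : nat) (G : 'M[R]_(m, n)) (b : 'cV[R]_m)
  (f : 'cV[R]_n -> 'cV[R]_n) :
  (interior (polyhedron G b) !=set0) ->
  C1 f ->
  (forall i : 'I_m, convex_fun (fun x => b i 0 - (row i G *m f x) 0 0)) ->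
  invariant_set f (polyhedron G b) <->
  exists H : 'M[R]_(m, m), mxnonneg H /\
    forall x : 'cV[R]_n, mxle (H *m b - b) (H *m G *m x - G *m f x).
Proof.
move=> [x0 ix0] _ hcvx.
have rowE : forall (i : 'I_m) (y : 'cV[R]_n), (row i G *m y) 0 0 = (G *m y) i 0.
  by move=> i y; rewrite -row_mul mxE.
split; last first.
  move=> [H [H0 hH]] x hx k Pk j i.
  rewrite hx; have := hH (x k) j i; rewrite -mulmxA !mxE (ord1 i).
  have : \sum_(l < m) H j l * (G *m x k) l 0 <= \sum_(l < m) H j l * b l 0.
    apply: ler_sum => l _; apply: ler_wpM2l; first exact: H0.
    exact: Pk.
  lra.
move=> inv.
pose a := fun (j : nat) (x : 'cV[R]_n) =>
  oapp (fun k : 'I_m => b k 0 - (G *m x) k 0) 0 (insub j).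
have aE : forall (k : 'I_m) x, a k x = b k 0 - (G *m x) k 0.
  by move=> k x; rewrite /a valK.
have aa : forall j, affn (a j).
  move=> j x y t; rewrite /a; case: (insub j) => [k|] /=; last by ring.
  rewrite mulmxDr -!scalemxAr !mxE; ring.
have Px0 : polyhedron G b x0 := nbhs_singleton ix0.
have slater : forall j, (j < m)%N -> 0 < a j x0 \/ forall z, 0 <= a j z.
  move=> j jm; have -> : j = Ordinal jm by [].
  set k := Ordinal jm.
  pose v : 'cV[R]_n := (row k G)^T.
  have Gv : (G *m v) k 0 = \sum_(l < n) G k l ^+ 2.
    by rewrite mxE; apply: eq_bigr => l _; rewrite !mxE expr2.
  have [c0|c0] := eqVneq (\sum_(l < n) G k l ^+ 2) 0.
    right => z; rewrite aE.
    have Gk0 : forall l, G k l = 0.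
      move=> l; apply/eqP; rewrite -sqrf_eq0; apply/eqP.
      by move/psumr_eq0P : c0 => -> // l' _; exact: sqr_ge0.
    have Gz0 : forall y : 'cV[R]_n, (G *m y) k 0 = 0.
      by move=> y; rewrite mxE big1 // => l _; rewrite Gk0 mul0r.
    rewrite Gz0 subr0; have := Px0 k 0; rewrite Gz0 //.
  left; rewrite aE.
  have cp : 0 < \sum_(l < n) G k l ^+ 2.
    by rewrite lt_neqAle eq_sym c0 /=; apply: sumr_ge0 => l _; exact: sqr_ge0.
  have [e e0 Pe] := @near_dir R n x0 v _ ix0.
  have Gv' := Gv; rewrite mxE in Gv'.
  have := Pe k 0; rewrite mulmxDr -scalemxAr !mxE Gv'.
  have : 0 < e * \sum_(l < n) G k l ^+ 2 by apply: mulr_gt0.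
  lra.
have hrow : forall i : 'I_m, exists l : nat -> R, (forall j, 0 <= l j) /\
    forall z, setT z -> \sum_(j < m) l j * a j z <= b i 0 - (row i G *m f z) 0 0.
  move=> i; apply: (@multi R _ m a setT).
  - by [].
  - by move=> x y t _ _; exact: hcvx.
  - exact: aa.
  - move=> z _ hz; rewrite rowE subr_ge0.
    have Pz : polyhedron G b z.
      move=> k j; rewrite (ord1 j); have := hz k (ltn_ord k); rewrite aE; lra.
    have := inv (fun k => iter k f z) (fun k => erefl) 0 Pz.
    by move=> /(_ i 0).
  - by exists x0.
have [L hL] := choice hrow.
exists (\matrix_(i, j) L i j); split.
  by move=> i j; rewrite mxE; case: (hL i) => + _; apply.
move=> x i j; rewrite (ord1 j) -mulmxA !mxE.
case: (hL i) => _ /(_ x I).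
rewrite (eq_bigr (fun k : 'I_m => L i k * b k 0 - L i k * (G *m x) k 0)); last first.
  by move=> k _; rewrite aE mulrBr.
rewrite sumrB rowE.
have e1 : \sum_(k < m) (\matrix_(i0, j0) L i0 j0) i k * b k 0 = \sum_(k < m) L i k * b k 0.
  by apply: eq_bigr => k _; rewrite mxE.
have e2 : \sum_(k < m) (\matrix_(i0, j0) L i0 j0) i k * (G *m x) k 0 = \sum_(k < m) L i k * (G *m x) k 0.
  by apply: eq_bigr => k _; rewrite mxE.
rewrite e1 e2 [(G *m f x) i 0]mxE; lra.
Qed.
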